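(* Let $(\mathcal{T},\mathcal{F},\mathcal{S})$ be a tree of fusion systems satisfying $(H)$ with completion $\mathcal{F}_\mathcal{T}$ on $S=\mathcal{S}(v_* )$, and assume (a) $\mathcal{F}(v)$ is saturated for every vertex $v$, and (b) $\mathcal{F}(e)=\mathcal{F}_{\mathcal{S}(e)}(\mathcal{S}(e))$ for every edge $e$. Let $P\trianglelefteq Q\le S$ with $P$ $\mathcal{F}_\mathcal{T}$-centric. If $\operatorname{Rep}_{\mathcal{F}_\mathcal{T}}(P,\mathcal{F})$ is a tree, then the image of the restriction map $\operatorname{res}^Q_P:\operatorname{Rep}_{\mathcal{F}_\mathcal{T}}(Q,\mathcal{F})\to\operatorname{Rep}_{\mathcal{F}_\mathcal{T}}(P,\mathcal{F})$ equals the subgraph $\operatorname{Rep}_{\mathcal{F}_\mathcal{T}}(P,\mathcal{F})^{\operatorname{Aut}_Q(P)}$ fixed by $\operatorname{Aut}_Q(P)$.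
   Context: Maps act on the right; $\alpha\circ\beta$ means first $\alpha$ then $\beta$. Trees of fusion systems, Hypothesis $(H)$ (there is a vertex $v_*$ such that for each vertex $v\ne v_*$ the edge $e$ at $v$ on the path to $v_*$ has $\mathcal{S}(f_{ev}):\mathcal{S}(e)\to\mathcal{S}(v)$ an isomorphism), the identification of all $\mathcal{S}(v),\mathcal{S}(e)$ with subgroups of $S$, and the completion $\mathcal{F}_\mathcal{T}$ (smallest fusion system on $S$ containing all $\mathcal{F}(v)$) are as follows: a tree of fusion systems consists of a finite tree $\mathcal{T}$, finite $p$-groups $\mathcal{S}(v),\mathcal{S}(e)$, fusion systems $\mathcal{F}(v)$ on $\mathcal{S}(v)$, $\mathcal{F}(e)$ on $\mathcal{S}(e)$, and for $v$ incident on $e$ a monomorphism $\mathcal{S}(f_{ev})$ which is an injective morphism of fusion systems $\mathcal{F}(e)\to\mathcal{F}(v)$. $\mathcal{F}_S(S)$ denotes the fusion system whose morphisms are conjugations by elements of $S$. $P$ is $\mathcal{F}$-centric if $C_S(P\varphi)=Z(P\varphi)$ for all $\varphi\in\operatorname{Hom}_\mathcal{F}(P,S)$. Saturation is the standard notion: every fully normalised subgroup is fully centralised and fully automised, and each $\varphi\in\operatorname{Hom}_\mathcal{F}(P,S)$ with $P\varphi$ fully centralised extends to $N_\varphi=\{g\in N_S(P)\mid \varphi^{-1}c_g\varphi\in\operatorname{Aut}_S(P\varphi)\}$. $\operatorname{Rep}_{\mathcal{F}_\mathcal{T}}(P,\mathcal{F})$: vertices are classes $[\alpha]_{\mathcal{F}(v)}$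 of $\alpha\in\operatorname{Hom}_{\mathcal{F}_\mathcal{T}}(P,\mathcal{S}(v))$ where $\alpha\sim\beta$ iff $\alpha\circ\gamma=\beta$ for some $\gamma\in\operatorname{Iso}_{\mathcal{F}(v)}(P\alpha,P\beta)$; edges are classes $[\gamma]_{\mathcal{F}(e)}$ of $\gamma\in\operatorname{Hom}_{\mathcal{F}_\mathcal{T}}(P,\mathcal{S}(e))$ defined similarly with $\mathcal{F}(e)$; the edge $[\gamma]_{\mathcal{F}(e)}$, $e=(v,w)$, joins $[\gamma\circ\iota_{\mathcal{S}(e)}^{\mathcal{S}(v)}]_{\mathcal{F}(v)}$ and $[\gamma\circ\iota_{\mathcal{S}(e)}^{\mathcal{S}(w)}]_{\mathcal{F}(w)}$. The restriction map $\operatorname{res}^Q_P$ sends $[\varphi]_{\mathcal{F}(x)}\mapsto[\varphi|_P]_{\mathcal{F}(x)}$ ($x$ a vertex or edge); it is a graph homomorphism. $\operatorname{Aut}_{\mathcal{F}_\mathcal{T}}(P)$ (hence its subgroup $\operatorname{Aut}_Q(P)$ of conjugations by elements of $Q$) acts on $\operatorname{Rep}_{\mathcal{F}_\mathcal{T}}(P,\mathcal{F})$ by $\psi\cdot[\varphi]_{\mathcal{F}(x)}=[\psi\circ\varphi]_{\mathcal{F}(x)}$. *)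

(* Defs.v *)
From HB Require Import structures.
From mathcomp Require Import all_boot all_order all_fingroup all_solvable.
Set Implicit Arguments. Unset Strict Implicit. Unset Printing Implicit Defensive.

Local Open Scope group_scope.

(* Fusion systems.  All groups live inside one finGroupType gT.  A morphism  *)
(* of a fusion system with domain P is represented by a finite function      *)
(* f : {ffun gT -> gT} normalised to be 1 outside P (so that equality of     *)
(* maps P -> S is equality of ffuns).  A fusion system F on S is a boolean   *)
(* predicate  F P f  meaning "f is an F-morphism P -> S"; then               *)
(* Hom_F(P,R) = { f | F P f and f(P) <= R }.  Maps act on the right:        *)
(* cmp P f g is "first f then g".                                            *)
Section Fusion.
Variable gT : finGroupType.
Notation mor := {ffun gT -> gT}.

Definition nmor (P : {set gT}) (f : gT -> gT) : mor :=
  [ffun x => if x \in P then f x else 1].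

Definition cmp (P : {set gT}) (f g : mor) : mor := nmor P (fun x => g (f x)).

Definition conjm (P : {set gT}) (s : gT) : mor := nmor P (fun x => x ^ s).

Definition fpred := {set gT} -> mor -> bool.

Definition hom_into (F : fpred) (P R : {set gT}) (f : mor) : bool :=
  F P f && (f @: P \subset R).

Definition fusion_system (S : {set gT}) (F : fpred) : Prop :=
  [/\ (forall P f, F P f ->
         [&& group_set P, P \subset S, f @: P \subset S & f == nmor P f]),
      (forall P f, F P f ->
         {in P &, {morph f : x y / x * y}} /\ {in P &, injective f}),
      (forall P s, group_set P -> P \subset S -> s \in S -> F P (conjm P s)),
      (forall P R f g, F P f -> F R g -> f @: P \subset R -> F P (cmp P f g)) &
      (forall P f, F P f -> exists2 g, F (f @: P) g & {in P, cancel f g})].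

Definition FS (S : {set gT}) : fpred := fun P f =>
  [&& group_set P, P \subset S & [exists s in S, f == conjm P s]].

Definition fully_normalised (S : {set gT}) (F : fpred) (P : {set gT}) : Prop :=
  forall f, F P f -> #|'N_S(f @: P)| <= #|'N_S(P)|.

Definition fully_centralised (S : {set gT}) (F : fpred) (P : {set gT}) : Prop :=
  forall f, F P f -> #|'C_S(f @: P)| <= #|'C_S(P)|.

Definition AutF (F : fpred) (P : {set gT}) : {set mor} :=
  [set f | F P f & f @: P == P].

Definition AutS (S P : {set gT}) : {set mor} := [set conjm P s | s in 'N_S(P)].

(* Aut_S(P) is a Sylow p-subgroup of Aut_F(P) *)
Definition fully_automised (p : nat) (S : {set gT}) (F : fpred) (P : {set gT}) :=
  AutS S P \subset AutF F P /\ #|AutS S P| = partn #|AutF F P| p.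

(* N_phi = { g in N_S(P) | phi^-1 c_g phi in Aut_S(P phi) } *)
Definition Nphi (S P : {set gT}) (f : mor) : {set gT} :=
  [set g in 'N_S(P) | [exists h in 'N_S(f @: P),
                         [forall x in P, f (x ^ g) == (f x) ^ h]]].

Definition saturated (p : nat) (S : {set gT}) (F : fpred) : Prop :=
  (forall P : {set gT}, group_set P -> P \subset S ->
     fully_normalised S F P -> fully_centralised S F P /\ fully_automised p S F P)
  /\ (forall P f, F P f -> fully_centralised S F (f @: P) ->
        exists2 g, F (Nphi S P f) g & {in P, g =1 f}).

Definition centric (S : {set gT}) (F : fpred) (P : {set gT}) : Prop :=
  forall f, F P f -> 'C_S(f @: P) = 'Z(f @: P).

Definition completion (V : Type) (S : {set gT}) (Fv : V -> fpred) (FT : fpred) :=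
  [/\ fusion_system S FT,
      (forall v P f, Fv v P f -> FT P f) &
      (forall G, fusion_system S G -> (forall v P f, Fv v P f -> G P f) ->
         forall P f, FT P f -> G P f)].

End Fusion.

Section Graph.
Variables (VT ET : finType) (VS : {set VT}) (ES : {set ET}) (ends : ET -> VT * VT).

Fixpoint gwalk (x y : VT) (es : seq ET) : Prop :=
  match es with
  | [::] => x = y
  | e :: es' => e \in ES /\
       exists z, (ends e = (x, z) \/ ends e = (z, x)) /\ gwalk z y es'
  end.

Fixpoint reduced (es : seq ET) : bool :=
  match es with
  | e :: ((e' :: _) as t) => (e != e') && reduced t
  | _ => true
  end.

Definition is_tree : Prop :=
  (forall x y, x \in VS -> y \in VS -> exists es, gwalk x y es) /\
  (forall x es, x \in VS -> gwalk x x es -> reduced es -> es = [::]).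

End Graph.

(* Rep_{F_T}(P, F) for a tree of fusion systems satisfying (H), after the    *)
(* identification of all S(v), S(e) with subgroups of S.  The tree is given  *)
(* rooted at v_* = root by a parent function par; the edge e_v (v != root)   *)
(* joins v and par v, and by (H) S(e_v) = S(v).                              *)
Section Rep.
Variables (gT : finGroupType) (V : finType) (root : V) (par : V -> V).
Variables (Sv Se : V -> {set gT}) (Fv Fe : V -> fpred gT) (FT : fpred gT).
Notation mor := {ffun gT -> gT}.

Definition rclass (Fx : fpred gT) (R P : {set gT}) (a : mor) : {set mor} :=
  [set b | hom_into FT P R b &&
           [exists g, [&& Fx (a @: P) g, g @: (a @: P) == b @: P & cmp P a g == b]]].

Definition RepV (P : {set gT}) : {set V * {set mor}} :=
  [set x | [exists a, hom_into FT P (Sv x.1) a &&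
                      (x.2 == rclass (Fv x.1) (Sv x.1) P a)]].

Definition RepE (P : {set gT}) : {set V * {set mor}} :=
  [set x | (x.1 != root) && [exists a, hom_into FT P (Se x.1) a &&
                      (x.2 == rclass (Fe x.1) (Se x.1) P a)]].

Definition repr_mor (C : {set mor}) : mor := odflt [ffun x => x] [pick a in C].

Definition RepEnds (P : {set gT}) (x : V * {set mor}) :=
  let a := repr_mor x.2 in
  ((x.1, rclass (Fv x.1) (Sv x.1) P a),
   (par x.1, rclass (Fv (par x.1)) (Sv (par x.1)) P a)).

Definition resV (Q P : {set gT}) : {set V * {set mor}} :=
  [set x | [exists a, hom_into FT Q (Sv x.1) a &&
                      (x.2 == rclass (Fv x.1) (Sv x.1) P (nmor P a))]].

Definition resE (Q P : {set gT}) : {set V * {set mor}} :=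
  [set x | (x.1 != root) && [exists a, hom_into FT Q (Se x.1) a &&
                      (x.2 == rclass (Fe x.1) (Se x.1) P (nmor P a))]].

Definition actV (P : {set gT}) (q : gT) (x : V * {set mor}) :=
  (x.1, rclass (Fv x.1) (Sv x.1) P (cmp P (conjm P q) (repr_mor x.2))).

Definition actE (P : {set gT}) (q : gT) (x : V * {set mor}) :=
  (x.1, rclass (Fe x.1) (Se x.1) P (cmp P (conjm P q) (repr_mor x.2))).

Definition fixedV (Q P : {set gT}) : {set V * {set mor}} :=
  [set x in RepV P | [forall q in Q, actV P q x == x]].

Definition fixedE (Q P : {set gT}) : {set V * {set mor}} :=
  [set x in RepE P | [forall q in Q, actE P q x == x]].

End Rep.

(* Main.v *)
Require Import Defs.
From HB Require Import structures.
From mathcomp Require Import all_boot all_order all_fingroup all_solvable.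
Set Implicit Arguments. Unset Strict Implicit. Unset Printing Implicit Defensive.
Local Open Scope group_scope.

Section Basic.
Variable gT : finGroupType.
Notation mor := {ffun gT -> gT}.

Lemma nmorE (P : {set gT}) f x : nmor P f x = if x \in P then f x else 1.
Proof. by rewrite ffunE. Qed.

Lemma nmor_in (P : {set gT}) f x : x \in P -> nmor P f x = f x.
Proof. by move=> h; rewrite nmorE h. Qed.

Lemma cmp_in (P : {set gT}) (f g : mor) x : x \in P -> cmp P f g x = g (f x).
Proof. by move=> h; rewrite /cmp nmor_in. Qed.

Lemma conjm_in (P : {set gT}) s x : x \in P -> conjm P s x = x ^ s.
Proof. by move=> h; rewrite /conjm nmor_in. Qed.

Lemma imset_in (P : {set gT}) (f g : mor) : {in P, f =1 g} -> f @: P = g @: P.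
Proof. exact: eq_in_imset. Qed.

Lemma cmp_img (P : {set gT}) (f g : mor) : cmp P f g @: P = g @: (f @: P).
Proof. by rewrite -imset_comp; apply: eq_in_imset => x xP; rewrite cmp_in. Qed.

Lemma conjm_img (P : {set gT}) s : conjm P s @: P = P :^ s.
Proof. by apply: eq_in_imset => x xP; rewrite conjm_in. Qed.

Variables (R : {group gT}) (F : fpred gT).
Hypothesis hF : fusion_system R F.

Lemma fs_props P f : F P f ->
  [/\ group_set P, P \subset R, f @: P \subset R & f = nmor P f].
Proof. by case: hF => h _ _ _ _ /h /and4P [a b c /eqP d]. Qed.

Lemma fs_out P f x : F P f -> x \notin P -> f x = 1.
Proof. by case/fs_props=> _ _ _ -> xP; rewrite nmorE (negbTE xP). Qed.

Lemma fs_morph P f : F P f -> {in P &, {morph f : x y / x * y}}.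
Proof. by case: hF => _ h _ _ _ /h []. Qed.

Lemma fs_inj P f : F P f -> {in P &, injective f}.
Proof. by case: hF => _ h _ _ _ /h []. Qed.

Lemma fs_conj P s : group_set P -> P \subset R -> s \in R -> F P (conjm P s).
Proof. by case: hF => _ _ h _ _; apply: h. Qed.

Lemma fs_cmp P Q f g : F P f -> F Q g -> f @: P \subset Q -> F P (cmp P f g).
Proof. by case: hF => _ _ _ h _; apply: h. Qed.

Lemma fs_inv P f : F P f -> exists2 g, F (f @: P) g & {in P, cancel f g}.
Proof. by case: hF => _ _ _ _ h; apply: h. Qed.

Lemma fs_imgroup P f : F P f -> group_set (f @: P).
Proof. by case/fs_inv=> g /fs_props []. Qed.

Lemma fs_one P f : F P f -> f 1 = 1.
Proof.
move=> hf; case/fs_props: (hf) => /group_setP [P1 _] _ _ _.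
have := fs_morph hf P1 P1; rewrite mulg1 => e.
by apply: (mulgI (f 1)); rewrite -e mulg1.
Qed.

Lemma fs_inv1 P f x : F P f -> x \in P -> f x^-1 = (f x)^-1.
Proof.
move=> hf xP; case: (fs_props hf) => gP _ _ _.
have xiP : x^-1 \in P by exact: (@groupVr _ (Group gP) x xP).
apply: (mulgI (f x)); rewrite -(fs_morph hf) // mulgV mulgV; exact: fs_one hf.
Qed.

Lemma fs_conjg P f x y : F P f -> x \in P -> y \in P -> f (x ^ y) = f x ^ f y.
Proof.
move=> hf xP yP; case: (fs_props hf) => gP _ _ _.
have yiP : y^-1 \in P by exact: (@groupVr _ (Group gP) y yP).
have hM := fs_morph hf.
have xyP : x * y \in P by exact: (@groupM _ (Group gP)).
by rewrite /conjg hM ?(fs_inv1 hf) ?hM //; exact: (@groupM _ (Group gP)).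
Qed.

End Basic.

Section Cls.
Variables (gT : finGroupType) (S : {group gT}) (FT : fpred gT).
Hypothesis hFT : fusion_system S FT.
Notation mor := {ffun gT -> gT}.

Lemma rclass_mk (Fx : fpred gT) R (P : {set gT}) (a b g : mor) :
  hom_into FT P R b -> Fx (a @: P) g -> {in P, forall x, g (a x) = b x} ->
  b \in rclass FT Fx R P a.
Proof.
move=> hb hg e; rewrite inE hb /=; apply/existsP; exists g.
have bn : b = nmor P b by case/andP: hb => /(fs_props hFT) [].
have ce : cmp P a g = b.
  by apply/ffunP=> x; rewrite /cmp bn !nmorE; case: ifP => // xP; rewrite e.
rewrite hg ce eqxx andbT /= -ce cmp_img //.
Qed.

Lemma rclass_get (Fx : fpred gT) R (P : {set gT}) (a b : mor) :
  b \in rclass FT Fx R P a ->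
  hom_into FT P R b /\ exists2 g, Fx (a @: P) g & {in P, forall x, g (a x) = b x}.
Proof.
rewrite inE => /andP [hb /existsP [g /and3P [hg _ /eqP ce]]]; split=> //.
by exists g => // x xP; rewrite -ce cmp_in.
Qed.

Lemma hom_FT P R (b : mor) : hom_into FT P R b -> FT P b.
Proof. by case/andP. Qed.
Lemma hom_img P R (b : mor) : hom_into FT P R b -> b @: P \subset R.
Proof. by case/andP. Qed.

Lemma hom_sub P (R R' : {set gT}) (b : mor) : R \subset R' -> hom_into FT P R b -> hom_into FT P R' b.
Proof. by move=> sR /andP [h1 h2]; rewrite /hom_into h1 (subset_trans h2). Qed.

Lemma hom_val P R (b : mor) x : hom_into FT P R b -> x \in P -> b x \in R.
Proof. by move=> /andP [_ h] xP; apply: (subsetP h); apply: imset_f. Qed.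

Variables (Fx : fpred gT) (Rx : {group gT}).
Hypothesis hFx : fusion_system Rx Fx.
Hypothesis hFxT : forall P f, Fx P f -> FT P f.

Lemma rclass_refl P (a : mor) : hom_into FT P Rx a -> a \in rclass FT Fx Rx P a.
Proof.
move=> ha; apply: (rclass_mk (g := conjm (a @: P) 1)) => //.
  apply: (fs_conj hFx) => //; first exact: (fs_imgroup hFT (hom_FT ha)).
  exact: hom_img ha.
by move=> x xP; rewrite conjm_in ?conjg1 //; apply: imset_f.
Qed.

Lemma rclass_sym P (a b : mor) : hom_into FT P Rx a ->
  b \in rclass FT Fx Rx P a -> a \in rclass FT Fx Rx P b.
Proof.
move=> ha /rclass_get [hb [g hg e]].
have [g' hg' c] := fs_inv hFx hg.
have ime : g @: (a @: P) = b @: P by rewrite -imset_comp; apply: eq_in_imset.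
rewrite ime in hg'; apply: (rclass_mk (g := g')) => // x xP.
by rewrite -e // c //; apply: imset_f.
Qed.

Lemma rclass_trans P (a b c : mor) :
  b \in rclass FT Fx Rx P a -> c \in rclass FT Fx Rx P b -> c \in rclass FT Fx Rx P a.
Proof.
move=> /rclass_get [hb [g hg e]] /rclass_get [hc [h hh e']].
have ime : g @: (a @: P) = b @: P by rewrite -imset_comp; apply: eq_in_imset.
apply: (rclass_mk (g := cmp (a @: P) g h)) => //.
  by apply: (fs_cmp hFx hg hh); rewrite ime.
by move=> x xP; rewrite cmp_in ?e ?e' //; apply: imset_f.
Qed.

Lemma rclass_eq P (a b : mor) : hom_into FT P Rx a ->
  b \in rclass FT Fx Rx P a -> rclass FT Fx Rx P b = rclass FT Fx Rx P a.
Proof.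
move=> ha hb; apply/setP=> c; apply/idP/idP => hc.
  exact: rclass_trans hb hc.
exact: rclass_trans (rclass_sym ha hb) hc.
Qed.

Lemma repr_in P (a : mor) : hom_into FT P Rx a ->
  repr_mor (rclass FT Fx Rx P a) \in rclass FT Fx Rx P a.
Proof.
move=> ha; rewrite /repr_mor; case: pickP => [b -> //|].
by move/(_ a); rewrite rclass_refl.
Qed.

End Cls.

Section Act.
Variables (gT : finGroupType) (S : {group gT}) (FT : fpred gT).
Hypothesis hFT : fusion_system S FT.
Notation mor := {ffun gT -> gT}.
Variables (P Q : {group gT}).
Hypotheses (hPQ : P <| Q) (hQS : Q \subset S).

Definition cq (q : gT) (f : mor) := cmp P (conjm P q) f.

Lemma qN q x : q \in Q -> x \in P -> x ^ q \in P.
Proof. by move=> qQ xP; rewrite memJ_norm // (subsetP (normal_norm hPQ)). Qed.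

Lemma qNP q : q \in Q -> P :^ q = P.
Proof. by move=> qQ; apply/normP; rewrite (subsetP (normal_norm hPQ)). Qed.

Lemma PS : P \subset S.
Proof. exact: subset_trans (normal_sub hPQ) hQS. Qed.

Lemma conjmT q : q \in Q -> FT P (conjm P q).
Proof. by move=> qQ; apply: (fs_conj hFT) => //; [apply: groupP | apply: PS | apply: (subsetP hQS)]. Qed.

Lemma cq_val q (b : mor) x : x \in P -> cq q b x = b (x ^ q).
Proof. by move=> xP; rewrite /cq cmp_in // conjm_in. Qed.

Lemma cq_img q (b : mor) : q \in Q -> cq q b @: P = b @: P.
Proof. by move=> qQ; rewrite /cq cmp_img conjm_img qNP. Qed.

Lemma cq_hom q (R : {set gT}) (b : mor) : q \in Q -> hom_into FT P R b -> hom_into FT P R (cq q b).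
Proof.
move=> qQ hb; rewrite /hom_into cq_img // (hom_img hb) andbT.
apply: (fs_cmp hFT (conjmT qQ) (hom_FT hb)).
by rewrite conjm_img qNP.
Qed.

Lemma cq_inv q (b : mor) : q \in Q -> b = nmor P b -> cq q^-1 (cq q b) = b.
Proof.
move=> qQ bn; apply/ffunP=> x; case xP: (x \in P).
  by rewrite cq_val // cq_val ?qN ?groupV // conjgKV.
by rewrite bn /cq /cmp !nmorE xP.
Qed.

Lemma res_hom (R : {set gT}) (a : mor) : hom_into FT Q R a -> hom_into FT P R (nmor P a).
Proof.
move=> ha; have -> : nmor P a = cmp P (conjm P 1) a.
  apply/ffunP=> x; case xP: (x \in P).
  by rewrite cmp_in // nmor_in // conjm_in // conjg1.
by rewrite /cmp !nmorE xP.
apply/andP; split.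
  apply: (fs_cmp hFT (conjmT (group1 Q)) (hom_FT ha)).
  by rewrite conjm_img conjsg1 (normal_sub hPQ).
rewrite cmp_img conjm_img conjsg1; apply: subset_trans (hom_img ha).
by apply: imsetS; apply: normal_sub hPQ.
Qed.

Variables (Fx : fpred gT) (Rx : {group gT}).
Hypothesis hFx : fusion_system Rx Fx.
Hypothesis hFxT : forall P f, Fx P f -> FT P f.

Lemma rclass_act q (b b' : mor) : q \in Q -> hom_into FT P Rx b ->
  b' \in rclass FT Fx Rx P b -> cq q b' \in rclass FT Fx Rx P (cq q b).
Proof.
move=> qQ hb /rclass_get [hb' [g hg e]].
apply: (rclass_mk hFT (g := g)); first exact: cq_hom.
  by rewrite cq_img.
by move=> x xP; rewrite !cq_val // e // qN.
Qed.

Lemma res_fixed q (a : mor) : q \in Q -> hom_into FT Q Rx a ->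
  rclass FT Fx Rx P (cq q (repr_mor (rclass FT Fx Rx P (nmor P a))))
  = rclass FT Fx Rx P (nmor P a).
Proof.
move=> qQ ha; set a' := nmor P a.
have ha' : hom_into FT P Rx a' := res_hom ha.
have hb := repr_in hFT hFx ha'.
apply: (rclass_eq hFT hFx ha').
apply: (rclass_trans hFT hFx _ (rclass_act qQ ha' hb)).
have hFa := hom_FT ha.
have imA : a' @: P = a @: P by apply: eq_in_imset => x xP; rewrite nmor_in.
have gA : group_set (a' @: P) := fs_imgroup hFT (hom_FT ha').
apply: (rclass_mk hFT (g := conjm (a' @: P) (a q))).
- exact: cq_hom.
- apply: (fs_conj hFx) => //; first exact: hom_img ha'.
  exact: hom_val ha qQ.
- move=> x xP; rewrite conjm_in; last by apply: imset_f.
  rewrite cq_val // /a' !nmor_in ?qN //.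
  by rewrite (fs_conjg hFT hFa) // (subsetP (normal_sub hPQ)).
Qed.

End Act.

Section Tree.
Variables (VT ET : finType) (VS : {set VT}) (ES : {set ET}) (ends : ET -> VT * VT).
Notation walk := (gwalk ES ends).

Definition hd_ne (e : ET) (s : seq ET) := if s is e' :: _ then e != e' else true.

Lemma reduced_cons (e : ET) (s : seq ET) : reduced (e :: s) = hd_ne e s && reduced s.
Proof. by case: s. Qed.

Lemma reduced_rcons (s : seq ET) (a : ET) :
  reduced (rcons s a) = reduced s && ((s == [::]) || (last a s != a)).
Proof.
elim: s => [|c s IH] //.
rewrite rcons_cons reduced_cons IH reduced_cons.
case: s {IH} => [|d s]; first by rewrite /= !andbT.
by rewrite [hd_ne _ _]/= [last _ _]/= [_ == _]/= !andbA.
Qed.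

Lemma reduced_rev (s : seq ET) : reduced (rev s) = reduced s.
Proof.
elim: s => [|c s IH] //; rewrite rev_cons reduced_rcons IH reduced_cons.
case: s {IH} => [|d s] /=; first by [].
rewrite rev_cons -cats1 last_cat /= andbC; congr (_ && _).
have -> : (rev s ++ [:: d] == [::]) = false by case: (rev s).
by rewrite eq_sym.
Qed.

Lemma reduced_rcons_cat (s : seq ET) (a : ET) (t : seq ET) :
  reduced (rcons s a ++ t) = [&& reduced (rcons s a), hd_ne a t & reduced t].
Proof.
elim: s => [|c s IH]; first by rewrite [rcons _ _]/= cat1s reduced_cons.
rewrite rcons_cons cat_cons reduced_cons IH reduced_cons.
have -> : hd_ne c (rcons s a ++ t) = hd_ne c (rcons s a) by case: s {IH}.
by rewrite !andbA.
Qed.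

Lemma walk_cat x y z w1 w2 : walk x y w1 -> walk y z w2 -> walk x z (w1 ++ w2).
Proof.
elim: w1 x => [|e w1 IH] x /=; first by move=> ->.
by case=> eE [u [hu hw]] h2; split=> //; exists u; split=> //; apply: IH.
Qed.

Lemma walk_rev x y w : walk x y w -> walk y x (rev w).
Proof.
elim: w x => [|e w IH] x /=; first by move=> ->.
case=> eE [u [hu hw]]; rewrite rev_cons -cats1.
apply: walk_cat (IH _ hw) _ => /=; split=> //; exists x; split=> //.
by case: hu; [right | left].
Qed.

Lemma walk_mem x y w e : walk x y w -> e \in w -> e \in ES.
Proof.
elim: w x => [|e' w IH] x //=; case=> eE [u [_ hw]].
by rewrite in_cons => /orP [/eqP ee|ew]; [rewrite ee | exact: IH hw ew].
Qed.

Lemma ends_same e x z1 z2 :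
  (ends e = (x, z1) \/ ends e = (z1, x)) ->
  (ends e = (x, z2) \/ ends e = (z2, x)) -> z1 = z2.
Proof.
by case=> -> [] [] -> //.
Qed.

Lemma walk_reduce x y w : walk x y w -> exists2 w', walk x y w' & reduced w'.
Proof.
elim: w x => [|e w IH] x /=; first by move=> ->; exists [::].
case=> eE [u [hu hw]]; have [w' hw' rw'] := IH _ hw.
case: w' hw' rw' => [|e' w'] hw' rw'.
  by exists [:: e] => //=; split=> //; exists u.
case: (eqVneq e e') => [ee|ne].
  move: hw'; rewrite -ee => -[_ [u' [hu' hw'']]].
  exists w'; last by move: rw'; rewrite reduced_cons => /andP [].
  suff xu : x = u' by rewrite xu.
  case: hu hu' => -> [] [] -> //; try by move=> ->.
exists [:: e, e' & w'] => /=; first by split=> //; exists u; split=> //.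
by rewrite ne.
Qed.

Hypothesis hT2 : forall x es, x \in VS -> walk x x es -> reduced es -> es = [::].

Lemma walk_uniq y w1 w2 x : y \in VS -> walk x y w1 -> walk x y w2 ->
  reduced w1 -> reduced w2 -> w1 = w2.
Proof.
move=> yV; elim: w1 x w2 => [|e1 w1 IH] x w2.
  by move=> /= xy; rewrite xy => h2 _ r2; rewrite (hT2 yV h2 r2).
case: w2 => [|e2 w2].
  by move=> h1 /= xy r1; have := hT2 yV (eq_ind_r (fun z => walk z y _) h1 (esym xy)) r1.
move=> h1 h2 r1 r2.
case: (eqVneq e1 e2) => [ee|ne].
  subst e2; case: h1 => _ [u1 [hu1 hw1]]; case: h2 => _ [u2 [hu2 hw2]].
  have eu := ends_same hu1 hu2; subst u2.
  rewrite (IH u1 w2 hw1 hw2) //.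
    by move: r1; rewrite reduced_cons => /andP [].
  by move: r2; rewrite reduced_cons => /andP [].
have hc : walk y y (rev (e1 :: w1) ++ e2 :: w2) := walk_cat (walk_rev h1) h2.
have rc : reduced (rev (e1 :: w1) ++ e2 :: w2).
  rewrite rev_cons reduced_rcons_cat -rev_cons reduced_rev r1 r2 /=.
  by rewrite ne.
by have := hT2 yV hc rc; case: (rev (e1 :: w1)).
Qed.

Variables (fV : VT -> VT) (fE : ET -> ET).
Hypothesis fES : forall e, e \in ES -> fE e \in ES.
Hypothesis fends : forall e, e \in ES -> ends (fE e) = (fV (ends e).1, fV (ends e).2).
Hypothesis finj : forall e e', e \in ES -> e' \in ES -> fE e = fE e' -> e = e'.

Lemma walk_map x y w : walk x y w -> walk (fV x) (fV y) (map fE w).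
Proof.
elim: w x => [|e w IH] x /=; first by move=> ->.
case=> eE [u [hu hw]]; split; first exact: fES.
exists (fV u); split; last exact: IH.
by rewrite fends //; case: hu => ->; [left | right].
Qed.

Lemma reduced_map x y w : walk x y w -> reduced w -> reduced (map fE w).
Proof.
elim: w x => [|e w IH] x // [eE [u [hu hw]]].
rewrite map_cons !reduced_cons => /andP [h r]; rewrite (IH _ hw r) andbT.
case: w hw h {IH r} => [|e' w] // [e'E _] ne /=.
by apply/eqP => /(finj eE e'E) /eqP; rewrite (negbTE ne).
Qed.

End Tree.

Lemma map_fixed (T : eqType) (f : T -> T) (s : seq T) :
  map f s = s -> forall x, x \in s -> f x = x.
Proof.
elim: s => [|a s IH] //= [e1 e2] x; rewrite in_cons => /orP [/eqP ->|] //; exact: IH.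
Qed.

Lemma Zimg (gT : finGroupType) (f : {ffun gT -> gT}) (B : {set gT}) :
  group_set B -> {in B &, {morph f : x y / x * y}} -> {in B &, injective f} ->
  #|'Z(f @: B)| <= #|'Z(B)|.
Proof.
move=> gB hm hi.
suff sZ : 'Z(f @: B) \subset f @: 'Z(B).
  exact: leq_trans (subset_leq_card sZ) (leq_imset_card _ _).
apply/subsetP=> y /setIP [/imsetP [x xB ->] /centP cy].
apply: imset_f; rewrite /center inE xB /=; apply/centP => z zB.
have zxB : z * x \in B by exact: (@groupM _ (Group gB)).
have xzB : x * z \in B by exact: (@groupM _ (Group gB)).
apply: hi => //; rewrite !hm //; exact: cy (imset_f _ zB).
Qed.

Lemma conj_comm (gT : finGroupType) (y c : gT) : y ^ c = y -> commute y c.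
Proof. by move=> e; rewrite /commute conjgC e. Qed.

Section Main.
Variables (gT : finGroupType) (p : nat) (S : {group gT})
  (V : finType) (root : V) (par : V -> V)
  (Sv Se : V -> {group gT}) (Fv Fe : V -> fpred gT) (FT : fpred gT)
  (P Q : {group gT}).
Hypotheses (hroot : par root = root) (hpar : forall v, exists n, iter n par v = root)
  (hSroot : Sv root = S) (hSe : forall v, v != root -> Se v = Sv v)
  (hSesub : forall v, v != root -> (Se v :> {set gT}) \subset Sv (par v))
  (hFv : forall v, fusion_system (Sv v) (Fv v))
  (hFe : forall v, v != root -> fusion_system (Se v) (Fe v))
  (hFeFv : forall v, v != root -> forall R f, Fe v R f -> Fv v R f /\ Fv (par v) R f)
  (hcomp : completion S Fv FT)
  (hsat : forall v, saturated p (Sv v) (Fv v))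
  (hFeFS : forall v, v != root -> forall R f, Fe v R f = FS (Se v) R f)
  (hPQ : P <| Q) (hQS : Q \subset S) (hcentric : centric S FT P).

Notation mor := {ffun gT -> gT}.
Notation SvS := (fun v => Sv v : {set gT}).
Notation SeS := (fun v => Se v : {set gT}).

Lemma hFT : fusion_system S FT.
Proof. by case: hcomp. Qed.

Lemma hFvT v R f : Fv v R f -> FT R f.
Proof. by case: hcomp => _ h _; apply: h. Qed.

Lemma hSvS v : (Sv v :> {set gT}) \subset S.
Proof.
have [n] := hpar v; elim: n v => [|n IH] v; first by move=> /= ->; rewrite hSroot.
rewrite iterSr => /IH h.
case: (eqVneq v root) => [-> | vr]; first by rewrite hSroot.
by apply: subset_trans h; rewrite -hSe //; apply: hSesub.
Qed.

Lemma hSew v w : v != root -> (w = v \/ w = par v) -> (Se v :> {set gT}) \subset Sv w.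
Proof. by move=> vr [] ->; [rewrite hSe | apply: hSesub]. Qed.

Lemma hFew v w R f : v != root -> (w = v \/ w = par v) -> Fe v R f -> Fv w R f.
Proof. by move=> vr [] -> /(hFeFv vr) []. Qed.

Lemma hFeT v R f : v != root -> Fe v R f -> FT R f.
Proof. by move=> vr /(hFeFv vr) [/hFvT]. Qed.

Lemma resV_fixed x : x \in resV SvS Fv FT Q P -> x \in fixedV SvS Fv FT Q P.
Proof.
case: x => v C; rewrite inE => /existsP [a /andP [ha /eqP /= ->]].
rewrite inE; apply/andP; split.
  rewrite inE; apply/existsP; exists (nmor P a) => /=.
  by rewrite (res_hom hFT hPQ hQS ha) eqxx.
apply/forall_inP => q qQ; rewrite /actV /=.
by have := res_fixed hFT hPQ hQS (hFv v) qQ ha; rewrite /cq => ->.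
Qed.

Lemma resE_fixed x : x \in resE root SeS Fe FT Q P -> x \in fixedE root SeS Fe FT Q P.
Proof.
case: x => v C; rewrite inE => /andP [/= vr /existsP [a /andP [ha /eqP /= ->]]].
rewrite inE; apply/andP; split.
  rewrite inE vr; apply/existsP; exists (nmor P a) => /=.
  by rewrite (res_hom hFT hPQ hQS ha) eqxx.
apply/forall_inP => q qQ; rewrite /actE /=.
by have := res_fixed hFT hPQ hQS (hFe vr) qQ ha; rewrite /cq => ->.
Qed.


Lemma rclass_mono (F1 F2 : fpred gT) (R1 R2 : {set gT}) (a b : mor) :
  (forall R f, F1 R f -> F2 R f) -> R1 \subset R2 ->
  b \in rclass FT F1 R1 P a -> b \in rclass FT F2 R2 P a.
Proof.
move=> hF sR /rclass_get [hb [g hg e]].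
by apply: (rclass_mk hFT (g := g)) => //; [apply: hom_sub hb | apply: hF].
Qed.

Lemma RepE_get v C : (v, C) \in RepE root SeS Fe FT P ->
  v != root /\ exists2 a0, hom_into FT P (Se v) a0 & C = rclass FT (Fe v) (Se v) P a0.
Proof.
rewrite inE => /andP [/= vr /existsP [a /andP [ha /eqP /= ->]]].
by split=> //; exists a.
Qed.

Lemma edge_repr v C : (v, C) \in RepE root SeS Fe FT P ->
  repr_mor C \in C /\ hom_into FT P (Se v) (repr_mor C).
Proof.
case/RepE_get => vr [a ha ->]; have h := repr_in hFT (hFe vr) ha.
by split=> //; case: (rclass_get h).
Qed.

Lemma edge_class v C : (v, C) \in RepE root SeS Fe FT P ->
  C = rclass FT (Fe v) (Se v) P (repr_mor C).
Proof.
move=> he; have [vr [a ha eC]] := RepE_get he; have [hb _] := edge_repr he.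
by rewrite {1}eC; rewrite eC in hb *; rewrite (rclass_eq hFT (hFe vr) ha hb).
Qed.

Lemma actE_in q e : q \in Q -> e \in RepE root SeS Fe FT P ->
  actE SeS Fe FT P q e \in RepE root SeS Fe FT P.
Proof.
case: e => v C qQ he; have [vr _] := RepE_get he; have [_ hb] := edge_repr he.
rewrite inE /= vr /=; apply/existsP; exists (cq P q (repr_mor C)).
by rewrite (cq_hom hFT hPQ hQS qQ hb) eqxx.
Qed.

Lemma ends_act_w q v C w : q \in Q -> (v, C) \in RepE root SeS Fe FT P ->
  (w = v \/ w = par v) ->
  rclass FT (Fv w) (Sv w) P
     (repr_mor (rclass FT (Fe v) (Se v) P (cq P q (repr_mor C))))
  = rclass FT (Fv w) (Sv w) P
     (cq P q (repr_mor (rclass FT (Fv w) (Sv w) P (repr_mor C)))).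
Proof.
move=> qQ he hw; have [vr _] := RepE_get he; have [_ hb] := edge_repr he.
set b := repr_mor C.
have hbq := cq_hom hFT hPQ hQS qQ hb.
have hbw : hom_into FT P (Sv w) b := hom_sub (hSew vr hw) hb.
have hbqw : hom_into FT P (Sv w) (cq P q b) := hom_sub (hSew vr hw) hbq.
have h1 := repr_in hFT (hFe vr) hbq.
have h1' := rclass_mono (fun R f => hFew vr hw) (hSew vr hw) h1.
rewrite (rclass_eq hFT (hFv w) hbqw h1').
have h2 := repr_in hFT (hFv w) hbw.
have h2' := rclass_act hFT hPQ hQS qQ hbw h2.
by rewrite (rclass_eq hFT (hFv w) hbqw h2').
Qed.

Lemma ends_act q e : q \in Q -> e \in RepE root SeS Fe FT P ->
  RepEnds par SvS Fv FT P (actE SeS Fe FT P q e) =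
  (actV SvS Fv FT P q (RepEnds par SvS Fv FT P e).1,
   actV SvS Fv FT P q (RepEnds par SvS Fv FT P e).2).
Proof.
case: e => v C qQ he; rewrite /RepEnds /actV /actE /=.
rewrite -/(cq P q _) -/(cq P q _) -/(cq P q _).
by rewrite (ends_act_w qQ he (or_introl erefl)) (ends_act_w qQ he (or_intror erefl)).
Qed.

Lemma actE_inv q e : q \in Q -> e \in RepE root SeS Fe FT P ->
  actE SeS Fe FT P q^-1 (actE SeS Fe FT P q e) = e.
Proof.
case: e => v C qQ he; have [vr _] := RepE_get he; have [hbC hb] := edge_repr he.
rewrite /actE /= -/(cq P q _) -/(cq P q^-1 _); congr (_, _).
set b := repr_mor C.
have hbq := cq_hom hFT hPQ hQS qQ hb.
have h1 := repr_in hFT (hFe vr) hbq.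
have h2 := rclass_act hFT hPQ hQS (groupVr qQ) hbq h1.
have bn : b = nmor P b by case: (fs_props hFT (hom_FT hb)).
rewrite (cq_inv hPQ qQ bn) in h2.
by rewrite (rclass_eq hFT (hFe vr) hb h2) -edge_class.
Qed.

Lemma ends_RepV e : e \in RepE root SeS Fe FT P ->
  (RepEnds par SvS Fv FT P e).1 \in RepV SvS Fv FT P.
Proof.
case: e => v C he; have [vr _] := RepE_get he; have [_ hb] := edge_repr he.
rewrite inE /=; apply/existsP; exists (repr_mor C).
by rewrite (hom_sub (hSew vr (or_introl erefl)) hb) eqxx.
Qed.


Lemma core v C w : (v, C) \in RepE root SeS Fe FT P ->
  (forall q, q \in Q -> actE SeS Fe FT P q (v, C) = (v, C)) ->
  (w = v \/ w = par v) ->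
  (w, rclass FT (Fv w) (Sv w) P (repr_mor C)) \in resV SvS Fv FT Q P ->
  exists2 a, hom_into FT Q (Se v) a & nmor P a = repr_mor C.
Proof.
move=> he hfix hw hres.
have [vr [a0 ha0 eC]] := RepE_get he; have [hbC hb] := edge_repr he.
set b := repr_mor C in hbC hb hres *.
have sw := hSew vr hw.
have hbw : hom_into FT P (Sv w) b := hom_sub sw hb.
have hFTb := hom_FT hb.
have PQ : P \subset Q := normal_sub hPQ.
have FIX : forall q, q \in Q -> exists2 t, t \in Se v & forall x, x \in P -> b (x ^ q) = (b x) ^ t.
  move=> q qQ; have := hfix q qQ; rewrite /actE /= -/(cq P q _) => -[eq1].
  have hbq := cq_hom hFT hPQ hQS qQ hb.
  have : b \in rclass FT (Fe v) (Se v) P (cq P q b).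
    by rewrite eq1.
  case/rclass_get => _ [g]; rewrite hFeFS // => /and3P [_ _ /exists_inP [s sS /eqP ->]] e.
  exists s^-1; first exact: groupVr.
  move=> x xP; have := e x xP; rewrite conjm_in; last by apply: imset_f.
  by rewrite cq_val // => <-; rewrite conjgK.
move: hres; rewrite inE => /existsP [al /andP [hal /eqP /= ecl]].
have hal' := res_hom hFT hPQ hQS hal.
have : b \in rclass FT (Fv w) (Sv w) P (nmor P al).
  by rewrite -ecl; exact: (rclass_refl hFT (hFv w) hbw).
case/rclass_get => _ [chi hchi echi].
have eA : nmor P al @: P = al @: P by apply: eq_in_imset => x xP; rewrite nmor_in.
rewrite eA in hchi.
have echi' : forall x, x \in P -> chi (al x) = b x by move=> x xP; rewrite -echi // nmor_in.
have eimg : chi @: (al @: P) = b @: P by rewrite -imset_comp; apply: eq_in_imset.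
have hFTal := hom_FT hal.
have gB : group_set (b @: P) := fs_imgroup hFT hFTb.
have hfc : fully_centralised (Sv w) (Fv w) (chi @: (al @: P)).
  rewrite eimg => f hf.
  have hbf : FT P (cmp P b f) := fs_cmp hFT hFTb (hFvT hf) (subxx _).
  have hc := hcentric hbf; rewrite cmp_img in hc.
  apply: leq_trans (_ : #|'Z(f @: (b @: P))| <= _).
    by rewrite -hc; apply: subset_leq_card; apply: setSI; apply: hSvS.
  apply: leq_trans (Zimg gB (fs_morph (hFv w) hf) (fs_inj (hFv w) hf)) _.
  by apply: subset_leq_card; apply: setSI; apply: hom_img hbw.
have [g hg eg] := (proj2 (hsat w)) _ _ hchi hfc.
have sN : al @: Q \subset Nphi (Sv w) (al @: P) chi.
  apply/subsetP => y /imsetP [q qQ ->]; have [t tS ht] := FIX q qQ.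
  have tSw : t \in Sv w := subsetP sw t tS.
  rewrite inE; apply/andP; split.
    rewrite inE (hom_val hal qQ) /= inE; apply/subsetP => z /imsetP [x' /imsetP [x xP ->] ->].
    rewrite -(fs_conjg hFT hFTal (subsetP PQ x xP) qQ); apply: imset_f; exact (qN hPQ qQ xP).
  apply/exists_inP; exists t.
    rewrite inE tSw /= inE eimg; apply/subsetP => z /imsetP [x' /imsetP [x xP ->] ->].
    by rewrite -ht //; apply: imset_f; exact (qN hPQ qQ xP).
  apply/forall_inP => z /imsetP [x xP ->].
  rewrite -(fs_conjg hFT hFTal (subsetP PQ x xP) qQ) (echi' _ (qN hPQ qQ xP)).
  by rewrite echi' // ht.
set a := cmp Q al g.
have hFTa : FT Q a := fs_cmp hFT hFTal (hFvT hg) sN.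
have ea : forall x, x \in P -> a x = b x.
  move=> x xP; rewrite /a cmp_in ?(subsetP PQ) // eg; last by apply: imset_f.
  exact: echi'.
have ena : nmor P a = b.
  apply/ffunP => x; case xP: (x \in P); first by rewrite nmor_in // ea.
  by rewrite nmorE xP (fs_out hFT hFTb) ?xP.
exists a => //; rewrite /hom_into hFTa /=.
apply/subsetP => u /imsetP [q qQ ->]; have [t tS ht] := FIX q qQ.
have [_ _ aS _] := fs_props hFT hFTa.
have uS : a q \in S by apply: (subsetP aS); apply: imset_f.
have tS' : t \in S := subsetP (subset_trans sw (hSvS w)) t tS.
set c := a q * t^-1.
have cC : c \in 'C_S(b @: P).
  rewrite inE groupM ?groupV //=; apply/centP => y /imsetP [x xP ->].
  apply: commute_sym; apply: conj_comm; rewrite /c conjgM.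
  have : b (x ^ q) = b x ^ a q.
    rewrite -ea ?(qN hPQ qQ xP) // (fs_conjg hFT hFTa (subsetP PQ x xP) qQ).
    by rewrite ea.
  by rewrite ht // => <-; rewrite conjgK.
rewrite (hcentric hFTb) in cC.
have cSe : c \in Se v.
  apply: (subsetP (hom_img hb)); by case/setIP: cC.
by have := groupM cSe tS; rewrite /c mulgKV.
Qed.


Definition efixed (e : V * {set mor}) :=
  forall q, q \in Q -> actE SeS Fe FT P q e = e.

Lemma core_conseq v C w : (v, C) \in RepE root SeS Fe FT P -> efixed (v, C) ->
  (w = v \/ w = par v) ->
  (w, rclass FT (Fv w) (Sv w) P (repr_mor C)) \in resV SvS Fv FT Q P ->
  (v, C) \in resE root SeS Fe FT Q P /\
  forall w', (w' = v \/ w' = par v) ->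
    (w', rclass FT (Fv w') (Sv w') P (repr_mor C)) \in resV SvS Fv FT Q P.
Proof.
move=> he hf hw hr; have [a ha ena] := core he hf hw hr.
have [vr _] := RepE_get he.
split.
  rewrite inE /= vr /=; apply/existsP; exists a; rewrite ha /= ena.
  by rewrite -edge_class.
move=> w' hw'; rewrite inE /=; apply/existsP; exists a.
by rewrite (hom_sub (hSew vr hw') ha) ena eqxx.
Qed.

Lemma step e x z : e \in RepE root SeS Fe FT P -> efixed e ->
  (RepEnds par SvS Fv FT P e = (x, z) \/ RepEnds par SvS Fv FT P e = (z, x)) ->
  x \in resV SvS Fv FT Q P -> z \in resV SvS Fv FT Q P.
Proof.
case: e => v C he hf; rewrite /RepEnds /=.
case=> -[<- <-] hx.
  by have [_ h] := core_conseq he hf (or_introl erefl) hx; apply: h; right.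
by have [_ h] := core_conseq he hf (or_intror erefl) hx; apply: h; left.
Qed.

Lemma propagate w x y :
  gwalk (RepE root SeS Fe FT P) (RepEnds par SvS Fv FT P) x y w ->
  (forall e, e \in w -> efixed e) ->
  x \in resV SvS Fv FT Q P -> y \in resV SvS Fv FT Q P.
Proof.
elim: w x => [|e w IH] x /=; first by move=> ->.
case=> eE [u [hu hw]] hf hx; apply: (IH u hw).
  by move=> e' e'w; apply: hf; rewrite in_cons e'w orbT.
by apply: step eE (hf e (mem_head _ _)) hu hx.
Qed.

Hypothesis htree : is_tree (RepV SvS Fv FT P) (RepE root SeS Fe FT P) (RepEnds par SvS Fv FT P).

Definition x0 := (root, rclass FT (Fv root) (Sv root) P (nmor P (conjm Q 1))).

Lemma x0_res : x0 \in resV SvS Fv FT Q P.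
Proof.
rewrite inE /=; apply/existsP; exists (conjm Q 1); rewrite eqxx andbT.
have h : FT Q (conjm Q 1) by apply: (fs_conj hFT) => //; apply: groupP.
by rewrite /hom_into h hSroot; case: (fs_props hFT h).
Qed.

Lemma fixedV_res y : y \in fixedV SvS Fv FT Q P -> y \in resV SvS Fv FT Q P.
Proof.
rewrite inE => /andP [yV /forall_inP yf].
have x0f := resV_fixed x0_res; move: x0f; rewrite inE => /andP [x0V /forall_inP x0f].
case: htree => conn acyc.
have [w hw] := conn _ _ x0V yV; have [w' hw' rw'] := walk_reduce hw.
apply: (propagate hw') x0_res => e ew q qQ.
have fES : forall e, e \in RepE root SeS Fe FT P -> actE SeS Fe FT P q e \in RepE root SeS Fe FT P.
  by move=> e' he'; apply: actE_in.
have fends := fun e' (he' : e' \in RepE root SeS Fe FT P) => ends_act qQ he'.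
have finj : forall e1 e2, e1 \in RepE root SeS Fe FT P -> e2 \in RepE root SeS Fe FT P ->
    actE SeS Fe FT P q e1 = actE SeS Fe FT P q e2 -> e1 = e2.
  by move=> e1 e2 h1 h2 ee; rewrite -(actE_inv qQ h1) ee actE_inv.
have hm := walk_map fES fends hw'.
rewrite (eqP (x0f q qQ)) (eqP (yf q qQ)) in hm.
have rm := reduced_map finj hw' rw'.
have := walk_uniq acyc yV hm hw' rm rw'.
by move/map_fixed; apply.
Qed.

Lemma fixedE_res e : e \in fixedE root SeS Fe FT Q P -> e \in resE root SeS Fe FT Q P.
Proof.
rewrite inE => /andP [he /forall_inP ef].
have hf : efixed e by move=> q qQ; apply/eqP; apply: ef.
have y1V := ends_RepV he.
have y1f : (RepEnds par SvS Fv FT P e).1 \in fixedV SvS Fv FT Q P.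
  rewrite inE y1V /=; apply/forall_inP => q qQ.
  have h := ends_act qQ he; rewrite (hf q qQ) in h.
  by apply/eqP; exact (esym (congr1 fst h)).
have y1r := fixedV_res y1f.
case: e he hf y1r {ef y1V y1f} => v C he hf y1r.
by have [] := core_conseq he hf (or_introl erefl) y1r.
Qed.


Lemma main_result :
  resV SvS Fv FT Q P = fixedV SvS Fv FT Q P /\
  resE root SeS Fe FT Q P = fixedE root SeS Fe FT Q P.
Proof.
split; apply/setP => x; apply/idP/idP.
- exact: resV_fixed.
- exact: fixedV_res.
- exact: resE_fixed.
- exact: fixedE_res.
Qed.

End Main.

Theorem proposition4p2
  (gT : finGroupType) (p : nat) (S : {group gT})
  (V : finType) (root : V) (par : V -> V)
  (Sv Se : V -> {group gT}) (Fv Fe : V -> fpred gT) (FT : fpred gT)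
  (P Q : {group gT}) :
  prime p -> p.-group S ->
  (* the finite tree, rooted at v_* = root *)
  par root = root -> (forall v, exists n, iter n par v = root) ->
  (* identification with subgroups of S = S(v_* ) and hypothesis (H) *)
  Sv root = S ->
  (forall v, v != root -> Se v = Sv v) ->
  (forall v, v != root -> (Se v :> {set gT}) \subset Sv (par v)) ->
  (* tree of fusion systems *)
  (forall v, fusion_system (Sv v) (Fv v)) ->
  (forall v, v != root -> fusion_system (Se v) (Fe v)) ->
  (forall v, v != root -> forall R f, Fe v R f -> Fv v R f /\ Fv (par v) R f) ->
  completion S Fv FT ->
  (* (a) and (b) *)
  (forall v, saturated p (Sv v) (Fv v)) ->
  (forall v, v != root -> forall R f, Fe v R f = FS (Se v) R f) ->
  P <| Q -> Q \subset S -> centric S FT P ->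
  is_tree (RepV (fun v => Sv v : {set gT}) Fv FT P)
          (RepE root (fun v => Se v : {set gT}) Fe FT P)
          (RepEnds par (fun v => Sv v : {set gT}) Fv FT P) ->
  resV (fun v => Sv v : {set gT}) Fv FT Q P = fixedV (fun v => Sv v : {set gT}) Fv FT Q P /\
  resE root (fun v => Se v : {set gT}) Fe FT Q P = fixedE root (fun v => Se v : {set gT}) Fe FT Q P.
Proof.
move=> hp hSp hroot hpar hSroot hSe hSesub hFv hFe hFeFv hcomp hsat hFeFS hPQ hQS hcen htree.
exact: (main_result hpar hSroot hSe hSesub hFv hFe hFeFv hcomp hsat hFeFS hPQ hQS hcen htree).
Qed.
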